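(* Write $Q:=3^\ell$ with $\ell\ge 5$. Let $n_1,n_2,n_5,n_9$ be nonnegative integers for which $n_1+2n_2+5n_5+9n_9=Q-1$ and the union of the base-$3$ expansions of the $n_j$'s consists of one copy of each $3^i$ with $0\le i\le \ell-2$ and $i\ne 2$, along with either one copy of $2\cdot 9$ or two copies of $9$. Then the base-$3$ expansion of $n_5$ contains $Q/9$, and if $\ell\ge 6$ then the base-$3$ expansion of $n_9$ contains $Q/27$.
   Context: A term of the base-$p$ expansion of a nonnegative integer $m=\sum_j b_jp^j$ (with $0\le b_j\le p-1$) is some $b_jp^j$ with $b_j>0$. The union of the base-$p$ expansions of several integers means the multiset of all terms of all these integers. *)

(* Defs.v *)
From mathcomp Require Import all_boot.
Set Implicit Arguments. Unset Strict Implicit. Unset Printing Implicit Defensive.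

Definition digit (p m j : nat) : nat := (m %/ p ^ j) %% p.

(* The terms of the base-p expansion of m: the values b_j * p^j with b_j > 0.
   Positions j range over 0..m, which covers all nonzero digits (p^j > m
   for j > m when p >= 2). *)
Definition base_terms (p m : nat) : seq nat :=
  [seq digit p m j * p ^ j | j <- iota 0 m.+1 & digit p m j != 0].

Definition terms_union (p : nat) (ms : seq nat) : seq nat :=
  flatten [seq base_terms p m | m <- ms].

(* Main.v *)
Require Import Defs.
From mathcomp Require Import all_boot zify.

Lemma digit_lt3 n i : digit 3 n i < 3.
Proof. by rewrite /digit ltn_pmod. Qed.

Lemma rep_uniq a d i j : 0 < a < 3 -> 0 < d < 3 -> a * 3 ^ j = d * 3 ^ i -> a = d /\ j = i.
Proof.
move=> Ha Hd E.
have L: forall b k, 0 < b < 3 -> logn 3 (b * 3 ^ k) = k.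
  move=> b k Hb; rewrite lognM ?expn_gt0 //; last by lia.
  rewrite pfactorK //. by case/andP: Hb; case: b => [|[|[|]]].
have Eji : j = i by rewrite -(L a j Ha) E L.
split=> //; subst j. apply/eqP; rewrite -(eqn_pmul2r (expn_gt0 3 i)) E //.
Qed.

Lemma digit_big n i : n < 3 ^ i -> digit 3 n i = 0.
Proof. by move=> H; rewrite /digit divn_small. Qed.

Lemma count_bt n d i : 0 < d < 3 -> count_mem (d * 3 ^ i) (base_terms 3 n) = (digit 3 n i == d).
Proof.
move=> Hd; rewrite /base_terms count_map count_filter.
rewrite (eq_count (a2 := fun j => (digit 3 n i == d) && (j == i))); last first.
  move=> j /=. apply/idP/idP.
  - case/andP => /eqP E H0.
    have [Ea Ej] := @rep_uniq (digit 3 n j) d i j ltac:(by rewrite lt0n H0 digit_lt3) Hd E.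
    by subst; rewrite !eqxx.
  - case/andP => /eqP Ed /eqP Ej; subst. rewrite eqxx /=. by case/andP: Hd; case: (digit 3 n i) => [|[|[|]]].
case E: (digit 3 n i == d) => /=; last by rewrite count_pred0.
rewrite count_uniq_mem ?iota_uniq // mem_iota.
have Hin : i <= n.
  case: (leqP i n) => // Hi. move: E; rewrite digit_big; first by case/andP: Hd; case: d.
  have := @ltn_expl 3 i isT; lia.
by case: i Hin {E} => [|i] Hin /=; rewrite ?add0n // add1n ltnS Hin.
Qed.

Lemma countL1 l i : count_mem (3^i) [seq 3 ^ k | k <- iota 0 (l - 1) & k != 2] = ((i < l-1) && (i != 2)).
Proof.
rewrite count_map count_filter.
rewrite (eq_count (a2 := fun k => (i != 2) && (k == i))); last first.
  move=> k /=; rewrite eqn_exp2l //. by case: eqP => [->|]; rewrite ?andbF ?andbT.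
case: (i != 2); rewrite ?andbF ?andbT /= ?count_pred0 //.
by rewrite count_uniq_mem ?iota_uniq // mem_iota leq0n add0n.
Qed.

Lemma odd3 k : odd (3 ^ k).
Proof. by rewrite oddX orbT. Qed.

Lemma countL2 l i : count_mem (2 * 3^i) [seq 3 ^ k | k <- iota 0 (l - 1) & k != 2] = 0.
Proof.
rewrite count_map count_filter.
rewrite (eq_count (a2 := pred0)) ?count_pred0 //.
move=> k /=. case: eqP => // E. by have := odd3 k; rewrite E oddM.
Qed.

Lemma count_union x a b c e : count_mem x (terms_union 3 [:: a; b; c; e]) =
  count_mem x (base_terms 3 a) + count_mem x (base_terms 3 b) + count_mem x (base_terms 3 c) + count_mem x (base_terms 3 e).
Proof. by rewrite /terms_union /= !count_cat /= addn0 !addnA. Qed.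

Lemma dsplit d : d < 3 -> d = (d == 1) + 2 * (d == 2).
Proof. by case: d => [|[|[|]]]. Qed.

Lemma digit_fact l n1 n2 n5 n9 :
  (perm_eq (terms_union 3 [:: n1; n2; n5; n9])
           ([seq 3 ^ i | i <- iota 0 (l - 1) & i != 2] ++ [:: 2 * 9])
   \/
   perm_eq (terms_union 3 [:: n1; n2; n5; n9])
           ([seq 3 ^ i | i <- iota 0 (l - 1) & i != 2] ++ [:: 9; 9])) ->
  forall i, digit 3 n1 i + digit 3 n2 i + digit 3 n5 i + digit 3 n9 i
            = ((i < l-1) && (i != 2)) + 2 * (i == 2).
Proof.
move=> H i.
have C1 x : 0 < x < 3 -> count_mem (x * 3 ^ i) (terms_union 3 [:: n1; n2; n5; n9]) =
   (digit 3 n1 i == x) + (digit 3 n2 i == x) + (digit 3 n5 i == x) + (digit 3 n9 i == x).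
  by move=> Hx; rewrite count_union !count_bt.
rewrite (dsplit _ (digit_lt3 n1 i)) (dsplit _ (digit_lt3 n2 i)) (dsplit _ (digit_lt3 n5 i)) (dsplit _ (digit_lt3 n9 i)).
have E1 := C1 1 isT. have E2 := C1 2 isT. rewrite mul1n in E1.
have P18 : 2 * 9 = 2 * 3 ^ 2 by [].
have F1 : (2 * 9 == 3 ^ i) = false by apply/negbTE/eqP => E; have := odd3 i; rewrite -E.
have F2 : (9 == 2 * 3 ^ i) = false by apply/negbTE/eqP => E; by have := congr1 odd E; rewrite oddM.
have F3 : (9 == 3 ^ i) = (i == 2) by rewrite (_ : 9 = 3 ^ 2) // eqn_exp2l // eq_sym.
have R a1 a2 a5 a9 b1 b2 b5 b9 : a1 + 2 * b1 + (a2 + 2 * b2) + (a5 + 2 * b5) + (a9 + 2 * b9)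
   = (a1 + a2 + a5 + a9) + 2 * (b1 + b2 + b5 + b9) by lia.
rewrite R.
case: H => /permP H; rewrite !H !count_cat countL1 countL2 /= in E1 E2.
- rewrite P18 eqn_mul2l /= eqn_exp2l // eq_sym in E2. rewrite F1 in E1. by rewrite -E1 -E2 !addn0.
- rewrite F2 in E2. rewrite F3 in E1. rewrite -E1 -E2. case: (i == 2); rewrite /= ?andbF ?andbT ?addn0 ?add0n //.
Qed.

Lemma digitS n i : digit 3 n i.+1 = digit 3 (n %/ 3) i.
Proof. by rewrite /digit expnS divnMA. Qed.

Lemma expand N n : n < 3 ^ N -> n = \sum_(0 <= i < N) digit 3 n i * 3 ^ i.
Proof.
elim: N n => [|N IH] n Hn.
  by rewrite big_geq //; move: Hn; rewrite expn0; case: n.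
rewrite big_nat_recl //.
under eq_bigr => i _ do rewrite digitS expnS mulnCA.
rewrite -big_distrr /= -IH; last by rewrite ltn_divLR // -expnSr.
rewrite /digit expn0 divn1 muln1 {1}(divn_eq n 3); lia.
Qed.

Lemma expand_l n L : (forall i, L <= i -> digit 3 n i = 0) -> n = \sum_(0 <= i < L) digit 3 n i * 3 ^ i.
Proof.
move=> H. have Hn : n < 3 ^ (n + L) by have := @ltn_expl 3 (n + L) isT; lia.
rewrite {1}(expand _ _ Hn) (big_cat_nat _ (n := L)) //= ?leq0n ?leq_addl //.
rewrite [X in _ + X]big1_seq ?addn0 // => i /andP [_]; rewrite mem_iota => /andP [Hi _].
by rewrite H.
Qed.

Lemma mem_bt n i : digit 3 n i = 1 -> 3 ^ i \in base_terms 3 n.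
Proof.
move=> H. have Hn : 3 ^ i <= n.
  rewrite leqNgt; apply/negP => Hl. by rewrite digit_big in H.
apply/mapP; exists i; last by rewrite H mul1n.
rewrite mem_filter H -/(iota 0 n.+1) mem_iota leq0n add0n /= ltnS.
by apply: leq_trans Hn; apply: ltnW; apply: ltn_expl.
Qed.

Lemma Wprop a b e g : a + b + e + g = 1 ->
  let c := a + 2 * b + 5 * e + 9 * g in
  (c = 1 \/ c = 2 \/ c = 5 \/ c = 9) /\ (c = 5 -> e = 1) /\ (c = 9 -> g = 1).
Proof. move=> H /=; lia. Qed.

Lemma fbound (c : nat -> nat) : (forall i, i != 2 -> c i <= 9) -> c 2 <= 18 ->
  forall k, 2 * (\sum_(0 <= i < k) c i * 3 ^ i) + 9 <= 9 * 3 ^ k + (if 3 <= k then 162 else 0).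
Proof.
move=> H9 H18; elim=> [|k IH]; first by rewrite big_geq.
rewrite big_nat_recr //= expnS.
have [Ek|Hk] := eqVneq k 2.
  move: IH; rewrite Ek (_ : 3 ^ 2 = 9) //=; lia.
have := H9 k Hk. move: IH.
have Hm : c k * 3 ^ k <= 9 * 3 ^ k by apply: leq_mul => //; exact: H9.
move: Hm; case: k Hk => [|[|[|k]]] //= _; lia.
Qed.

Theorem lemma4p2 (l n1 n2 n5 n9 : nat) :
  5 <= l ->
  n1 + 2 * n2 + 5 * n5 + 9 * n9 = 3 ^ l - 1 ->
  (perm_eq (terms_union 3 [:: n1; n2; n5; n9])
           ([seq 3 ^ i | i <- iota 0 (l - 1) & i != 2] ++ [:: 2 * 9])
   \/
   perm_eq (terms_union 3 [:: n1; n2; n5; n9])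
           ([seq 3 ^ i | i <- iota 0 (l - 1) & i != 2] ++ [:: 9; 9])) ->
  (3 ^ l %/ 9 \in base_terms 3 n5) /\
  (6 <= l -> 3 ^ l %/ 27 \in base_terms 3 n9).
Proof.
move=> Hl Hsum Hperm.
have DF := @digit_fact l n1 n2 n5 n9 Hperm.
pose c i := digit 3 n1 i + 2 * digit 3 n2 i + 5 * digit 3 n5 i + 9 * digit 3 n9 i.
pose f k := \sum_(0 <= i < k) c i * 3 ^ i.
have Z i : l - 1 <= i -> [/\ digit 3 n1 i = 0, digit 3 n2 i = 0, digit 3 n5 i = 0 & digit 3 n9 i = 0].
  move=> Hi; have := DF i. have -> : (i < l - 1) = false by apply/negbTE; rewrite -leqNgt.
  have -> : (i == 2) = false by apply/negbTE/eqP; lia.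
  move=> /= E; split; lia.
have Hf : f (l - 1) = 3 ^ l - 1.
  rewrite -Hsum.
  rewrite {1}(@expand_l n1 (l - 1)); last by move=> i /Z [].
  rewrite {1}(@expand_l n2 (l - 1)); last by move=> i /Z [].
  rewrite {1}(@expand_l n5 (l - 1)); last by move=> i /Z [].
  rewrite {1}(@expand_l n9 (l - 1)); last by move=> i /Z [].
  rewrite !big_distrr -!big_split /f; apply: eq_bigr => i _; rewrite /c /=; nia.
have HW i : i < l - 1 -> i != 2 ->
  (c i = 1 \/ c i = 2 \/ c i = 5 \/ c i = 9) /\ (c i = 5 -> digit 3 n5 i = 1) /\ (c i = 9 -> digit 3 n9 i = 1).
  move=> H1 H2; have := DF i; rewrite H1 (negbTE H2) /= => E. exact: (Wprop _ _ _ _ E).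
have H9 i : i != 2 -> c i <= 9.
  move=> Hi; have := DF i; rewrite (negbTE Hi) /c; case: (i < l - 1) => /=; lia.
have H18 : c 2 <= 18 by have := DF 2; rewrite /c /=; lia.
have FB := @fbound c H9 H18.
have fS k : f k.+1 = f k + c k * 3 ^ k by rewrite /f big_nat_recr.
have E9 : 3 ^ l %/ 9 = 3 ^ (l - 2).
  rewrite {1}(_ : l = (l - 2) + 2); last lia. by rewrite expnD (_ : 3 ^ 2 = 9) // mulnK.
have E27 : 3 ^ l %/ 27 = 3 ^ (l - 3).
  rewrite {1}(_ : l = (l - 3) + 3); last lia. by rewrite expnD (_ : 3 ^ 3 = 27) // mulnK.
rewrite E9 E27.
have f0 : f 0 = 0 by rewrite /f big_geq.
have [El|Hl6] := eqVneq l 5.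
  subst l. split; last by [].
  have := Hf; rewrite /= !fS f0 /= => E.
  have [W0 _] := HW 0 isT isT. have [W1 _] := HW 1 isT isT.
  have [W3 [W35 _]] := HW 3 isT isT.
  apply: mem_bt; apply: W35. lia.
have [El|Hl7] := eqVneq l 6.
  subst l.
  have := Hf; rewrite /= !fS f0 /= => E.
  have [W0 _] := HW 0 isT isT. have [W1 _] := HW 1 isT isT.
  have [W3 [_ W39]] := HW 3 isT isT. have [W4 [W45 _]] := HW 4 isT isT.
  split; [apply: mem_bt; apply: W45 | move=> _; apply: mem_bt; apply: W39]; lia.
have H7 : 7 <= l by lia.
have EP : 3 ^ l = 9 * 3 ^ (l - 2).
  rewrite {1}(_ : l = 2 + (l - 2)); last lia. by rewrite expnD.
have EC : 3 ^ (l - 2) = 3 * 3 ^ (l - 3).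
  rewrite {1}(_ : l - 2 = (l - 3).+1); last lia. by rewrite expnS.
have C81 : 81 <= 3 ^ (l - 3).
  rewrite (_ : 81 = 3 ^ 4) // leq_pexp2l //; lia.
have F1 : f (l - 1) = f (l - 2) + c (l - 2) * 3 ^ (l - 2).
  rewrite -fS; congr f; lia.
have F2 : f (l - 2) = f (l - 3) + c (l - 3) * 3 ^ (l - 3).
  rewrite -fS; congr f; lia.
have B2 : 2 * f (l - 2) + 9 <= 9 * 3 ^ (l - 2) + 162.
  rewrite /f; have := FB (l - 2); rewrite ifT //; lia.
have B3 : 2 * f (l - 3) + 9 <= 9 * 3 ^ (l - 3) + 162.
  rewrite /f; have := FB (l - 3); rewrite ifT //; lia.
have [Wa [Wa5 _]] := HW (l - 2) ltac:(lia) ltac:(apply/eqP; lia).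
have [Wb [_ Wb9]] := HW (l - 3) ltac:(lia) ltac:(apply/eqP; lia).
rewrite F1 EP in Hf. rewrite EC in Hf B2.
have Ca : c (l - 2) = 5.
  move: (3 ^ (l - 3)) C81 Hf B2 B3 F2 => C C81 Hf B2 B3 F2.
  case: Wa => [e|[e|[e|e]]]; rewrite e in Hf; lia.
have Cb : c (l - 3) = 9.
  move: (3 ^ (l - 3)) C81 Hf B2 B3 F2 => C C81 Hf B2 B3 F2.
  rewrite Ca F2 in Hf.
  case: Wb => [e|[e|[e|e]]] //; rewrite e in Hf; lia.
split; first by apply: mem_bt; apply: Wa5.
by move=> _; apply: mem_bt; apply: Wb9.
Qed.
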